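(* Let $N\ge1$ and let $\mathfrak{g}^{(N)}$ be the Lie–Poisson algebra with coordinate functions $y_i^\alpha$ ($\alpha=1,2,3$, $i=0,\dots,N-1$) and brackets $$\{y_i^\alpha,y_j^\beta\}=\begin{cases}\epsilon^{\alpha\beta}_{\ \ \gamma}\,y^\gamma_{i+j}, & i+j<N,\\ 0,& i+j\ge N,\end{cases}$$ extended to polynomial functions by bilinearity and the Leibniz rule. Fix $\mathbf{b}=(b^1,b^2,b^3)^T\in\mathbb{R}^3$ (a constant), write $\mathbf{y}_i=(y_i^1,y_i^2,y_i^3)^T$ and let $\langle\cdot,\cdot\rangle$ be the Euclidean scalar product. For $k=1,\dots,N$ define $$H_k=2\langle\mathbf{b},\mathbf{y}_{k-1}\rangle+\sum_{i=0}^{k-2}\langle\mathbf{y}_i,\mathbf{y}_{k-i-2}\rangle,\qquad C_k=\sum_{i=k-1}^{N-1}\langle\mathbf{y}_i,\mathbf{y}_{N+k-i-2}\rangle.$$ Then, with $\mathcal{L}(\lambda)=\sum_{\alpha=1}^3\sigma^\alpha\big[b^\alpha+\sum_{i=0}^{N-1}y_i^\alpha\lambda^{-i-1}\big]$, one has $4\det(\mathcal{L}(\lambda)-\mu\mathbb 1)=4\mu^2+\langle\mathbf{b},\mathbf{b}\rangle+\sum_{k=1}^N H_k\lambda^{-k}+\sum_{k=1}^N C_k\lambda^{-N-k}$, and $$\{H_i,H_k\}=\{C_i,H_k\}=\{C_i,C_k\}=0\qquad (i,k=1,\dots,N).$$ Moreover each $C_k$ is a Casimir function of $\mathfrak{g}^{(N)}$: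 $\{C_k,y_j^\beta\}=0$ for all $\beta=1,2,3$, $j=0,\dots,N-1$, $k=1,\dots,N$.
   Context: $\epsilon^{\alpha\beta}_{\ \ \gamma}$ is the totally skew-symmetric tensor with $\epsilon^{12}_{\ \ 3}=1$, and repeated index $\gamma$ is summed over $1,2,3$. The matrices are $\sigma^1=\tfrac12\begin{pmatrix}0&\mathrm{i}\\ \mathrm{i}&0\end{pmatrix}$, $\sigma^2=\tfrac12\begin{pmatrix}0&1\\-1&0\end{pmatrix}$, $\sigma^3=\tfrac12\begin{pmatrix}\mathrm{i}&0\\0&-\mathrm{i}\end{pmatrix}$, and $\mathbb 1$ is the $2\times 2$ identity. Empty sums are zero. *)

(* Defs.v *)
From HB Require Import structures.
From mathcomp Require Import all_boot all_order all_algebra.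
From mathcomp Require Import mpoly.
From mathcomp Require Import complex.
Set Implicit Arguments. Unset Strict Implicit. Unset Printing Implicit Defensive.
Import Order.TTheory GRing.Theory Num.Theory.
Local Open Scope ring_scope.

Section LiePoisson.
Variable R : rcfType.
Variable N : nat.

(* the 3N coordinate functions y_i^alpha, i : 'I_N, alpha : 'I_3 (0-based:
   alpha = 0,1,2 stands for 1,2,3) are the variables of {mpoly R[N*3]} *)
Definition yidx (i : 'I_N) (a : 'I_3) : 'I_(N * 3) := mxvec_index i a.

(* y_k^a for a natural index k; it is 0 (never used) when k >= N *)
Definition yv (k : nat) (a : 'I_3) : {mpoly R[N * 3]} :=
  match (insub k : option 'I_N) with
  | Some i => 'X_(yidx i a)
  | None => 0
  end.

Definition eps (a b c : 'I_3) : R :=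
  match val a, val b, val c with
  | 0, 1, 2 | 1, 2, 0 | 2, 0, 1 => 1
  | 0, 2, 1 | 2, 1, 0 | 1, 0, 2 => -1
  | _, _, _ => 0
  end.

Definition coord_bracket (i : 'I_N) (a : 'I_3) (j : 'I_N) (b : 'I_3)
  : {mpoly R[N * 3]} :=
  if (i + j < N)%N then \sum_(c < 3) eps a b c *: yv (i + j) c else 0.

(* the unique biderivation (bilinear, Leibniz in each argument) extending
   coord_bracket to all polynomial functions *)
Definition pb (f g : {mpoly R[N * 3]}) : {mpoly R[N * 3]} :=
  \sum_(i < N) \sum_(a < 3) \sum_(j < N) \sum_(b < 3)
    mderiv (yidx i a) f * mderiv (yidx j b) g * coord_bracket i a j b.

Definition ydot (i j : nat) : {mpoly R[N * 3]} := \sum_(a < 3) yv i a * yv j a.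

Definition Hk (b : 'I_3 -> R) (k : nat) : {mpoly R[N * 3]} :=
  2%:R * (\sum_(a < 3) b a *: yv k.-1 a)
  + \sum_(0 <= i < k.-1) ydot i (k - i - 2).

Definition Ck (k : nat) : {mpoly R[N * 3]} :=
  \sum_(k.-1 <= i < N) ydot i (N + k - i - 2).

Definition toC (r : R) : R[i] := real_complex R r.

Definition sigma_entry (a : 'I_3) (r c : 'I_2) : R[i] :=
  match val a, val r, val c with
  | 0, 0, 1 | 0, 1, 0 => 'i
  | 1, 0, 1 => 1
  | 1, 1, 0 => -1
  | 2, 0, 0 => 'i
  | 2, 1, 1 => - 'i
  | _, _, _ => 0
  end.

Definition sigma (a : 'I_3) : 'M[R[i]]_2 :=
  \matrix_(r < 2, c < 2) (2%:R^-1 * sigma_entry a r c).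

(* Lax matrix L(lambda) evaluated at the point x of the phase space,
   y_i^a = x (yidx i a) *)
Definition Lax (b : 'I_3 -> R) (x : 'I_(N * 3) -> R) (lam : R[i]) : 'M[R[i]]_2 :=
  \sum_(a < 3)
    (toC (b a) + \sum_(i < N) toC (x (yidx i a)) * lam ^- i.+1) *: sigma a.

End LiePoisson.

Arguments yidx N i a.
Arguments yv {R} N k a.
Arguments pb {R} N f g.
Arguments Hk {R} N b k.
Arguments Ck R N k.
Arguments Lax {R} N b x lam.

(* Main.v *)
Require Import Defs.
From HB Require Import structures.
From mathcomp Require Import all_boot all_order all_algebra.
From mathcomp Require Import mpoly.
From mathcomp Require Import complex.
From mathcomp Require Import zify ring lra.
Import Order.TTheory GRing.Theory Num.Theory.
Local Open Scope ring_scope.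

Lemma det2 (F : comNzRingType) (A : 'M[F]_2) : \det A = A 0 0 * A 1 1 - A 0 1 * A 1 0.
Proof.
rewrite (expand_det_row _ 0) !big_ord_recl big_ord0 /cofactor !det_mx11 !mxE /=.
rewrite addr0 expr0 expr1 !mul1r mulN1r.
rewrite mulrN; congr (A _ _ * A _ _ - A _ _ * A _ _); exact/val_inj.
Qed.

Lemma det_gen (R : rcfType) (l : 'I_3 -> R[i]) (mu : R[i]) :
  4%:R * \det ((\sum_(a < 3) l a *: sigma R a) - mu%:M)
  = 4%:R * mu ^+ 2 + \sum_(a < 3) l a ^+ 2.
Proof.
rewrite det2 !mxE !summxE !big_ord_recl !big_ord0 !mxE /sigma_entry /=.
set h := (2%:R : R[i])^-1.
have hj : ('i : R[i]) * 'i = -1 by exact: mulCii.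
have hh : 2%:R * h = 1 by rewrite mulfV // pnatr_eq0.
set l0 := l ord0; set l1 := l (lift ord0 ord0); set l2 := l (lift ord0 (lift ord0 ord0)).
apply: (@eq_trans _ _ (4%:R * mu ^+ 2 - ('i * 'i) * ((2%:R * h) ^+ 2) * (l0 ^+ 2 + l2 ^+ 2)
   + ((2%:R * h) ^+ 2) * l1 ^+ 2)); first by ring.
rewrite hj hh; ring.
Qed.


Section S.
Variable R : rcfType.
Variable N : nat.
Variable b : 'I_3 -> R.
Local Notation P := {mpoly R[N * 3]}.

Definition Z (p : nat) (a : 'I_3) : P :=
  if p is p'.+1 then yv N p' a else (b a)%:MP.

Lemma yv_out k a : (N <= k)%N -> @yv R N k a = 0.
Proof. by move=> h; rewrite /yv insubN // -leqNgt. Qed.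

Lemma Z_out p a : (N < p)%N -> Z p a = 0.
Proof. by case: p => // p h; rewrite /= yv_out. Qed.

Lemma dX (i j : 'I_(N * 3)) : mderiv j 'X_i = (i == j)%:R :> P.
Proof.
rewrite mderivX mnm1E; case: eqP => [->|_]; last by rewrite scale0r.
have -> : (U_(j) - U_(j) = 0)%MM by apply/mnmP => k; rewrite mnmBE mnm0E subnn.
by rewrite mpolyX0 scale1r.
Qed.

Lemma yidx_eq (i j : 'I_N) (a c : 'I_3) : (yidx i a == yidx j c) = (i == j) && (a == c).
Proof.
apply/eqP/andP => [|[/eqP -> /eqP ->]] //.
rewrite /yidx /mxvec_index => /cast_ord_inj /enum_rank_inj [-> ->]; by [].
Qed.

Lemma dyv (i : 'I_N) a k c :
  mderiv (yidx i a) (@yv R N k c) = ((k == i) && (c == a))%:R.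
Proof.
rewrite /yv; case: insubP => [k' _ kv|].
  by rewrite dX yidx_eq -kv.
by rewrite mderiv0 -leqNgt => h; case: eqP => // e; move: h; rewrite e leqNgt ltn_ord.
Qed.

Lemma dZ (i : 'I_N) a p c :
  mderiv (yidx i a) (Z p c) = ((p == i.+1) && (c == a))%:R.
Proof. by case: p => [|p] /=; [rewrite mderivC | rewrite dyv eqSS]. Qed.


Definition Phi (m : nat) : P := \sum_(0 <= p < m.+1) \sum_(a < 3) Z p a * Z (m - p) a.

Lemma natb_mul (c : bool) (x : P) : c%:R * x = if c then x else 0.
Proof. by case: c; rewrite ?mul1r ?mul0r. Qed.
Lemma mul_natb (c : bool) (x : P) : x * c%:R = if c then x else 0.
Proof. by case: c; rewrite ?mulr1 ?mulr0. Qed.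

Lemma sum3_if (X : bool) (F : 'I_3 -> P) a :
  \sum_(c < 3) (if X && (c == a) then F c else 0) = if X then F a else 0.
Proof.
case: X => /=; last by rewrite big1.
rewrite (bigD1 a) //= eqxx big1 ?addr0 // => c /negbTE ->; by [].
Qed.

Lemma sumnat_delta (n k : nat) (F : nat -> P) :
  \sum_(0 <= p < n) (if p == k then F p else 0) = if (k < n)%N then F k else 0.
Proof.
elim: n => [|n IH]; first by rewrite big_geq.
rewrite big_nat_recr //= IH.
case: (ltngtP k n) => h.
- by rewrite addr0 ltnS ltnW.
- by rewrite addr0 ltnS leqNgt h.
- by rewrite h ltnSn add0r.
Qed.

Lemma dPhi (i : 'I_N) a m :
  mderiv (yidx i a) (Phi m) = if (i < m)%N then 2%:R * Z (m - i.+1) a else 0.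
Proof.
rewrite /Phi raddf_sum /=.
under eq_bigr => p _ do rewrite raddf_sum /=.
under eq_bigr => p _ do under eq_bigr => c _ do
  rewrite mderivM !dZ natb_mul mul_natb.
under eq_bigr => p _ do rewrite big_split /= sum3_if sum3_if.
rewrite big_split /= sumnat_delta ltnS.
have E : forall p, (p < m.+1)%N -> ((m - p == i.+1) = (i < m) && (p == m - i.+1))%N.
  move=> p hp; apply/eqP/andP => [e|[h1 /eqP h2]]; [split; [|apply/eqP] | ]; lia.
under eq_big_nat => p hp.
  rewrite E; last by case/andP: hp.
  over.
case: (ltnP i m) => h /=; last by rewrite big1 ?addr0.
rewrite sumnat_delta ltnS leq_subr; ring.
Qed.


Definition T u v w : P :=
  \sum_(a < 3) \sum_(c < 3) (Z u a * Z v c * \sum_(d < 3) eps R a c d *: Z w d).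

Lemma coordE (i j : 'I_N) a c :
  coord_bracket R i a j c = \sum_(d < 3) eps R a c d *: Z (i + j).+1 d.
Proof.
rewrite /coord_bracket; case: ifP => //= h.
by symmetry; apply: big1 => d _; rewrite yv_out ?scaler0 // leqNgt h.
Qed.

Lemma pbPhi m n : pb N (Phi m) (Phi n) =
  \sum_(0 <= i < N) \sum_(0 <= j < N)
     (if (i < m)%N && (j < n)%N then 4%:R * T (m - i.+1) (n - j.+1) (i + j).+1 else 0).
Proof.
rewrite /pb big_mkord; apply: eq_bigr => i _.
rewrite big_mkord exchange_big; apply: eq_bigr => j _ /=.
under eq_bigr => a _ do under eq_bigr => c _ do rewrite !dPhi coordE.
rewrite /T; case: (ltnP i m) => hi; case: (ltnP j n) => hj /=;
  try by (apply: big1 => a _; apply: big1 => c _; rewrite ?(mul0r, mulr0)).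
rewrite mulr_sumr; apply: eq_bigr => a _; rewrite mulr_sumr; apply: eq_bigr => c _.
ring.
Qed.


Lemma eps12 a c d : eps R c a d = - eps R a c d.
Proof.
move: a c d; do 3! case=> [[|[|[|?]]] ?] //=; by rewrite /eps /= ?opprK ?oppr0.
Qed.

Lemma eps23 a c d : eps R a d c = - eps R a c d.
Proof.
move: a c d; do 3! case=> [[|[|[|?]]] ?] //=; by rewrite /eps /= ?opprK ?oppr0.
Qed.

Lemma T_expand u v w : T u v w =
  \sum_(a < 3) \sum_(c < 3) \sum_(d < 3) eps R a c d *: (Z u a * Z v c * Z w d).
Proof.
apply: eq_bigr => a _; apply: eq_bigr => c _; rewrite mulr_sumr.
by apply: eq_bigr => d _; rewrite scalerAr.
Qed.

Lemma T12 u v w : T v u w = - T u v w.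
Proof.
rewrite !T_expand exchange_big -sumrN; apply: eq_bigr => a _.
rewrite -sumrN; apply: eq_bigr => c _; rewrite -sumrN; apply: eq_bigr => d _.
by rewrite eps12 scaleNr; congr (- (_ *: _)); rewrite (mulrC (Z v c)).
Qed.

Lemma T23 u v w : T u w v = - T u v w.
Proof.
rewrite !T_expand -sumrN; apply: eq_bigr => a _.
rewrite exchange_big -sumrN; apply: eq_bigr => c _; rewrite -sumrN; apply: eq_bigr => d _.
by rewrite eps23 scaleNr; congr (- (_ *: _)); rewrite -!mulrA (mulrC (Z w d)).
Qed.

Lemma T_w0 u v w : (N < w)%N -> T u v w = 0.
Proof.
move=> h; apply: big1 => a _; apply: big1 => c _.
by rewrite big1 ?mulr0 // => d _; rewrite Z_out ?scaler0.
Qed.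

Definition S (K : nat) (psi : nat -> nat -> nat -> R) : P :=
  \sum_(0 <= u < K) \sum_(0 <= v < K) \sum_(0 <= w < K) psi u v w *: T u v w.

Lemma S12 K psi : S K psi = - S K (fun u v w => psi v u w).
Proof.
rewrite /S exchange_big -sumrN; apply: eq_bigr => u _.
rewrite -sumrN; apply: eq_bigr => v _; rewrite -sumrN; apply: eq_bigr => w _.
by rewrite T12 scalerN.
Qed.

Lemma S23 K psi : S K psi = - S K (fun u v w => psi u w v).
Proof.
rewrite /S -sumrN; apply: eq_bigr => u _.
rewrite exchange_big -sumrN; apply: eq_bigr => v _; rewrite -sumrN; apply: eq_bigr => w _.
by rewrite T23 scalerN.
Qed.

Lemma S_add K f g : S K (fun u v w => f u v w + g u v w) = S K f + S K g.
Proof.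
rewrite /S -big_split; apply: eq_bigr => u _; rewrite -big_split; apply: eq_bigr => v _.
by rewrite -big_split; apply: eq_bigr => w _; rewrite scalerDl.
Qed.

Lemma S_opp K f : S K (fun u v w => - f u v w) = - S K f.
Proof.
rewrite /S -sumrN; apply: eq_bigr => u _; rewrite -sumrN; apply: eq_bigr => v _.
by rewrite -sumrN; apply: eq_bigr => w _; rewrite scaleNr.
Qed.

Lemma S0 K f : (forall u v w, f u v w = 0) -> S K f = 0.
Proof.
move=> h; apply: big1 => u _; apply: big1 => v _; apply: big1 => w _.
by rewrite h scale0r.
Qed.

Lemma S_antisym K chi :
  (forall u v w, chi u v w - chi v u w - chi u w v + chi w u v + chi v w u - chi w v u = 0) ->
  S K chi = 0.
Proof.
move=> h.
have e1 := S12 K chi.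
have e2 := S23 K chi.
have e3 := S23 K (fun u v w => chi v u w).
have e4 := S12 K (fun u v w => chi u w v).
have e5 := S12 K (fun u v w => chi w u v).
simpl in *.
have eA : S K (fun u v w => chi v u w) = - S K chi by rewrite e1 opprK.
have eB : S K (fun u v w => chi u w v) = - S K chi by rewrite e2 opprK.
have eC : S K (fun u v w => chi w u v) = S K chi by rewrite -[RHS]opprK -eA e3 opprK.
have eD : S K (fun u v w => chi v w u) = S K chi by rewrite -[RHS]opprK -eB e4 opprK.
have eE : S K (fun u v w => chi w v u) = - S K chi by rewrite -eC e5 opprK.
have E : S K chi *+ 6 = 0.
  rewrite -(@S0 K (fun u v w => chi u v w - chi v u w - chi u w v + chi w u v + chi v w u - chi w v u) h).
  rewrite !S_add !S_opp eA eB eC eD eE !opprK.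
  by rewrite !mulrS mulr0n !addrA addr0.
move: E; rewrite -scaler_nat => /(congr1 (fun x => (6%:R : R)^-1 *: x)).
rewrite scalerA mulVf ?scale1r ?scaler0 //.
by rewrite pnatr_eq0.
Qed.


Lemma key_nat (m n u v w : nat) : (u + v + w = (m+n).-1)%N ->
  (((u<m) && (v<n)) + ((w<m)&&(u<n)) + ((v<m)&&(w<n)) =
  ((v<m) && (u<n)) + ((u<m)&&(w<n)) + ((w<m)&&(v<n)))%N.
Proof.
move=> e.
case: (ltnP u m) => h1; case: (ltnP v m) => h2; case: (ltnP w m) => h3;
case: (ltnP u n) => h4; case: (ltnP v n) => h5; case: (ltnP w n) => h6 /=; lia.
Qed.

Definition chi (m n u v w : nat) : R := ((u < m) && (v < n) && (u + v + w == (m + n).-1))%N%:R.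

Lemma chi_alt m n u v w :
  chi m n u v w - chi m n v u w - chi m n u w v + chi m n w u v + chi m n v w u
  - chi m n w v u = 0.
Proof.
rewrite /chi.
have -> : (v + u + w = u + v + w)%N by lia.
have -> : (u + w + v = u + v + w)%N by lia.
have -> : (w + u + v = u + v + w)%N by lia.
have -> : (v + w + u = u + v + w)%N by lia.
have -> : (w + v + u = u + v + w)%N by lia.
case: (eqVneq (u + v + w)%N (m + n).-1) => e; last first.
  by rewrite !andbF /=; lra.
rewrite !andbT.
move: (key_nat m n u v w e) => /(congr1 (fun x => x%:R : R)); rewrite !natrD => k; lra.
Qed.

Lemma ext_sum (A B : nat) (G : nat -> P) : (A <= B)%N ->
  (forall i, (A <= i)%N -> (i < B)%N -> G i = 0) ->
  \sum_(0 <= i < B) G i = \sum_(0 <= i < A) G i.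
Proof.
move=> hAB hG; rewrite (@big_cat_nat _ _ _ A) //=.
have -> : \sum_(A <= i < B) G i = 0.
  rewrite big_nat_cond; apply: big1 => i /andP[/andP[h1 h2] _]; exact: hG.
by rewrite addr0.
Qed.

Lemma restr (L m : nat) (G : nat -> P) :
  (forall i, (L <= i)%N -> (i < m)%N -> G i = 0) ->
  \sum_(0 <= i < L) (if (i < m)%N then G i else 0) = \sum_(0 <= i < m) G i.
Proof.
move=> hG.
transitivity (\sum_(0 <= i < L + m) (if (i < m)%N then G i else 0)).
  symmetry; apply: ext_sum; first exact: leq_addr.
  by move=> i h1 h2; case: ifP => // h; apply: hG.
rewrite (@ext_sum m); first by apply: eq_big_nat => i /andP[_ ->].
  exact: leq_addl.
by move=> i h1 _; rewrite ltnNge h1.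
Qed.

Lemma if_and_sum (L : nat) (c : bool) (d : nat -> bool) (F : nat -> P) :
  \sum_(0 <= j < L) (if c && d j then F j else 0) =
  if c then \sum_(0 <= j < L) (if d j then F j else 0) else 0.
Proof. by case: c => //; rewrite big1. Qed.

Lemma Sred m n : S (m + n) (chi m n) =
  \sum_(0 <= u < m) \sum_(0 <= v < n) T u v ((m + n).-1 - (u + v)).
Proof.
rewrite /S.
have inner : forall u v, \sum_(0 <= w < m + n) chi m n u v w *: T u v w =
   if (u < m)%N && (v < n)%N then T u v ((m + n).-1 - (u + v)) else 0.
  move=> u v; rewrite /chi; case: ifP => h.
    rewrite (_ : \sum_(0 <= w < m + n) _ =
       \sum_(0 <= w < m + n) (if w == ((m + n).-1 - (u + v))%N then T u v w else 0)).
      by rewrite sumnat_delta; case/andP: h => h1 h2; rewrite ifT //; lia.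
    apply: eq_bigr => w _; rewrite /=.
    have -> : (u + v + w == (m + n).-1)%N = (w == (m + n).-1 - (u + v))%N.
      by case/andP: h => h1 h2; apply/eqP/eqP; lia.
    by case: eqP; rewrite ?scale1r ?scale0r.
  by apply: big1 => w _; rewrite scale0r.
under eq_bigr => u _ do under eq_bigr => v _ do rewrite inner.
under eq_bigr => u _ do rewrite if_and_sum.
rewrite restr; last by move=> i h1 h2; lia.
apply: eq_bigr => u _; rewrite restr //; move=> i h1 h2; lia.
Qed.

Lemma pbPhiPhi m n : pb N (Phi m) (Phi n) = 0.
Proof.
rewrite pbPhi.
under eq_bigr => i _ do rewrite if_and_sum.
rewrite restr; last first.
  move=> i h1 _; apply: big1 => j _; case: ifP => // _.
  by rewrite T_w0 ?mulr0 //; lia.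
under eq_bigr => i _.
  rewrite restr; last by move=> j h1 _; rewrite T_w0 ?mulr0 //; lia.
  over.
rewrite big_nat_rev /=.
under eq_big_nat => i hi do rewrite big_nat_rev /=.
have -> : \sum_(0 <= i < m) \sum_(0 <= i0 < n)
    4%:R * T (m - (m - i.+1).+1) (n - (n - i0.+1).+1) (m - i.+1 + (n - i0.+1)).+1
  = \sum_(0 <= i < m) \sum_(0 <= j < n) 4%:R * T i j ((m + n).-1 - (i + j)).
  apply: eq_big_nat => i /andP[_ hi]; apply: eq_big_nat => j /andP[_ hj].
  by congr (_ * T _ _ _); lia.
under eq_bigr => i _ do rewrite -mulr_sumr.
rewrite -mulr_sumr -Sred S_antisym ?mulr0 //.
exact: chi_alt.
Qed.


Lemma eps13 a c d : eps R d c a = - eps R a c d.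
Proof.
move: a c d; do 3! case=> [[|[|[|?]]] ?] //=; by rewrite /eps /= ?opprK ?oppr0.
Qed.

Definition B (be : 'I_3) p q : P :=
  \sum_(a < 3) \sum_(d < 3) eps R a be d *: (Z p a * Z q d).

Lemma Bsym be p q : B be q p = - B be p q.
Proof.
rewrite /B exchange_big -sumrN; apply: eq_bigr => a _; rewrite -sumrN.
by apply: eq_bigr => d _; rewrite eps13 scaleNr mulrC.
Qed.

Lemma Bzero be p q : (N < p)%N || (N < q)%N -> B be p q = 0.
Proof.
case/orP => h; apply: big1 => a _; apply: big1 => d _.
  by rewrite [Z p _]Z_out // mul0r scaler0.
by rewrite [Z q _]Z_out // mulr0 scaler0.
Qed.

Lemma half0 (X : P) : X = - X -> X = 0.
Proof.
move=> e; have : X *+ 2 = 0 by rewrite mulr2n {1}e addNr.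
rewrite -scaler_nat => /(congr1 (fun x => (2%:R : R)^-1 *: x)).
by rewrite scalerA mulVf ?scale1r ?scaler0 // pnatr_eq0.
Qed.

Lemma sumB0 be s : \sum_(0 <= i < s.+1) B be i (s - i) = 0.
Proof.
apply: half0; rewrite {1}big_nat_rev /= -sumrN; apply: eq_big_nat => i /andP[_ hi].
by rewrite -Bsym; congr (B _ _ _); lia.
Qed.

Lemma casimir m (j : 'I_N) be : (N < m)%N -> pb N (Phi m) (yv N j be) = 0.
Proof.
move=> hm.
rewrite /pb.
have step : forall (i : 'I_N) a,
  \sum_(j' < N) \sum_(c < 3) (Phi m)^`M(yidx i a) * (yv N j be)^`M(yidx j' c) *
      coord_bracket R i a j' c = (Phi m)^`M(yidx i a) * coord_bracket R i a j be.
  move=> i a; rewrite (bigD1 j) //= (bigD1 be) //=.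
  rewrite dyv !eqxx /= mulr1.
  rewrite big1 ?addr0; last first.
    by move=> c /negbTE hc; rewrite dyv eqxx (eq_sym be) hc mulr0 mul0r.
  rewrite big1 ?addr0 // => j' /negbTE hj; apply: big1 => c _.
  have hj' : (nat_of_ord j == nat_of_ord j') = false.
    by apply/negbTE/eqP => e; move/negbT: hj; rewrite -(inj_eq val_inj) /= e eqxx.
  by rewrite dyv hj' mulr0 mul0r.
rewrite (eq_bigr _ (fun i _ => eq_bigr _ (fun a _ => step i a))).
under eq_bigr => i _ do under eq_bigr => a _ do rewrite dPhi coordE.
rewrite (_ : \sum_(i < N) _ = \sum_(i < N) 2%:R * B be (m - i.+1) (i + j).+1); last first.
  apply: eq_bigr => i _.
  have hi : (i < m)%N by apply: (ltn_trans (ltn_ord i)).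
  rewrite hi /B mulr_sumr; apply: eq_bigr => a _; rewrite !mulr_sumr.
  apply: eq_bigr => d _.
  by rewrite -!scalerAr mulrA.
rewrite -mulr_sumr -(big_mkord xpredT (fun i => B be (m - i.+1) (i + j).+1)).
rewrite -(@ext_sum N m); last 2 first.
- exact: ltnW.
- by move=> i h1 _; rewrite Bzero //; apply/orP; right; lia.
rewrite big_nat_rev /=.
rewrite (_ : \sum_(0 <= i < m) _ = \sum_(0 <= i < m) B be i ((m + j) - i)); last first.
  by apply: eq_big_nat => i /andP[_ hi]; congr (B _ _ _); lia.
rewrite -(@ext_sum m (m + j).+1) ?sumB0 ?mulr0 //; first lia.
by move=> i h1 _; rewrite Bzero //; apply/orP; left; lia.
Qed.


Lemma Zyv p a : (0 < p)%N -> Z p a = yv N p.-1 a.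
Proof. by case: p. Qed.

Lemma HkE k : (1 <= k)%N -> Hk N b k = Phi k.
Proof.
case: k => // k _.
rewrite /Hk /Phi big_nat_recl // big_nat_recr //= subnn.
under [X in _ = X + _]eq_bigr => a _ do rewrite mul_mpolyC.
under [X in _ = _ + (_ + X)]eq_bigr => a _ do rewrite /= mulrC mul_mpolyC.
rewrite (_ : \sum_(0 <= i < k) \sum_(a < 3) yv N i a * Z (k.+1 - i.+1) a
   = \sum_(0 <= i < k) ydot R N i (k.+1 - i - 2)); last first.
  apply: eq_big_nat => i /andP[_ hi]; apply: eq_bigr => a _.
  by rewrite Zyv ?subn_gt0 //; congr (_ * yv _ _ _); lia.
by rewrite mulr2n mulrDl mul1r; ring.
Qed.

Lemma CkE k : (1 <= k <= N)%N -> Ck R N k = Phi (N + k)%N.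
Proof.
case/andP=> hk hkN.
rewrite /Ck /Phi big_nat_recl // subn0.
rewrite [X in _ = X + _]big1 ?add0r; last first.
  by move=> a _; rewrite (@Z_out (N + k)%N) ?mulr0 //; lia.
rewrite (@ext_sum N (N + k)%N); last 2 first.
- exact: leq_addr.
- by move=> i h1 _; apply: big1 => a _; rewrite Z_out ?mul0r //; lia.
rewrite [X in _ = X](@big_cat_nat _ _ _ k.-1) /=; [|lia|lia].
rewrite [X in _ = X + _]big1_seq ?add0r; last first.
  move=> i; rewrite mem_index_iota => /andP[_ hi]; apply: big1 => a _.
  by rewrite [Z (_ - _) _]Z_out ?mulr0 //; lia.
apply: eq_big_nat => i /andP[h1 h2]; apply: eq_bigr => a _.
rewrite /= Zyv; last by lia.
by congr (_ * yv _ _ _); lia.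
Qed.


Lemma yv_ord (i : 'I_N) a : yv N i a = 'X_(yidx i a) :> P.
Proof. by rewrite /yv valK. Qed.

Definition zz (x : 'I_(N * 3) -> R) p a : R := (Z p a).@[x].

Lemma zz_out x p a : (N < p)%N -> zz x p a = 0.
Proof. by move=> h; rewrite /zz Z_out // meval0. Qed.

Lemma Phi_eval x m :
  (Phi m).@[x] = \sum_(0 <= p < m.+1) \sum_(a < 3) zz x p a * zz x (m - p) a.
Proof.
rewrite /Phi rmorph_sum; apply: eq_bigr => p _.
by rewrite rmorph_sum; apply: eq_bigr => a _; rewrite rmorphM.
Qed.

Definition Pa x a : {poly R[i]} := \poly_(p < N.+1) toC (zz x p a).

Lemma coefPa x a k : (Pa x a)`_k = toC (zz x k a).
Proof.
rewrite /Pa coef_poly; case: ltnP => // h.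
by rewrite zz_out ?rmorph0.
Qed.

Lemma l_expand x lam a :
  toC (b a) + \sum_(i < N) toC (x (yidx i a)) * lam ^- i.+1 = (Pa x a).[lam^-1].
Proof.
rewrite /Pa horner_poly big_ord_recl /= expr0 mulr1 /zz /= mevalC.
congr (_ + _); apply: eq_bigr => i _.
by rewrite /= yv_ord mevalXU exprVn.
Qed.

Lemma sumsq x t :
  \sum_(a < 3) (Pa x a).[t] ^+ 2 =
  \sum_(0 <= m < (N + N).+1) toC ((Phi m).@[x]) * t ^+ m.
Proof.
have hs : forall a, (size (Pa x a * Pa x a)%R <= (N + N).+1)%N.
  move=> a; apply: (leq_trans (size_mul_leq _ _)).
  have h : (size (Pa x a) <= N.+1)%N by exact: size_poly.
  lia.
under eq_bigr => a _ do rewrite expr2 -hornerM (horner_coef_wide _ (hs a)).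
rewrite exchange_big big_mkord; apply: eq_bigr => m _.
rewrite -mulr_suml; congr (_ * _).
rewrite Phi_eval /toC rmorph_sum big_mkord.
under eq_bigr => a _ do rewrite coefM.
rewrite exchange_big; apply: eq_bigr => p _.
rewrite rmorph_sum; apply: eq_bigr => a _.
by rewrite !coefPa rmorphM.
Qed.


Lemma det_part (x : 'I_(N * 3) -> R) (lam mu : R[i]) :
     4%:R * \det (Lax N b x lam - mu%:M)
     = 4%:R * mu ^+ 2 + toC (\sum_(a < 3) b a * b a)
       + \sum_(1 <= k < N.+1) toC (Hk N b k).@[x] * lam ^- k
       + \sum_(1 <= k < N.+1) toC (Ck R N k).@[x] * lam ^- (N + k).
Proof.
rewrite /Lax det_gen.
under eq_bigr => a _ do rewrite l_expand.
rewrite sumsq big_nat_recl // expr0 mulr1.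
rewrite Phi_eval big_nat1 subnn.
rewrite (@big_cat_nat _ _ _ N) //=; last lia.
have sh : forall F : nat -> R[i], \sum_(N <= i < N + N) F i = \sum_(0 <= k < N) F (k + N)%N.
  by move=> F; rewrite -{1}[N]add0n big_addn addnK.
rewrite sh !big_add1 /= !addrA.
congr (_ + _ + _ + _).
- by congr (toC _); apply: eq_bigr => a _; rewrite /zz /= mevalC.
- apply: eq_big_nat => k /andP[_ hk].
  by rewrite HkE // exprVn.
- apply: eq_big_nat => k /andP[_ hk].
  rewrite CkE; last lia.
  rewrite exprVn; congr (toC (Phi _).@[x] * _ ^- _).
    lia.
  lia.
Qed.

End S.

Theorem proposition2 (R : rcfType) (N : nat) (hN : (1 <= N)%N) (b : 'I_3 -> R) :
  (forall (x : 'I_(N * 3) -> R) (lam mu : R[i]), lam != 0 ->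
     4%:R * \det (Lax N b x lam - mu%:M)
     = 4%:R * mu ^+ 2 + toC (\sum_(a < 3) b a * b a)
       + \sum_(1 <= k < N.+1) toC (Hk N b k).@[x] * lam ^- k
       + \sum_(1 <= k < N.+1) toC (Ck R N k).@[x] * lam ^- (N + k))
  /\ (forall i k : nat, (1 <= i <= N)%N -> (1 <= k <= N)%N ->
        pb N (Hk N b i) (Hk N b k) = 0 /\ pb N (Ck R N i) (Hk N b k) = 0
        /\ pb N (Ck R N i) (Ck R N k) = 0)
  /\ (forall (k : nat) (j : 'I_N) (be : 'I_3), (1 <= k <= N)%N ->
        pb N (Ck R N k) (yv N j be) = 0).
Proof.
split; first by move=> x lam mu _; exact: det_part.
split.
  move=> i k hi hk.
  have hi1 : (1 <= i)%N by case/andP: hi.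
  have hk1 : (1 <= k)%N by case/andP: hk.
  rewrite (@HkE R N b i hi1) (@HkE R N b k hk1) (@CkE R N b i hi) (@CkE R N b k hk).
  by rewrite !pbPhiPhi.
move=> k j be hk.
rewrite (@CkE R N b k hk) casimir //.
case/andP: hk => hk _; lia.
Qed.
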